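(* Let $r_1,\dots,r_k$ be positive integers, let $\Omega_1,\dots,\Omega_k$ be pairwise disjoint non-empty finite sets, and for each $i$ let $G_i\leq\mathrm{Sym}(\Omega_i)$ be a cyclic permutation group of order $r_i$. Then the internal direct product $G_1\cdot G_2\cdots G_k$, acting on $\Omega_1\cup\cdots\cup\Omega_k$, has the EKR property.
   Context: The internal direct product consists of the products $g_1\cdots g_k$ with $g_i\in G_i$, multiplied componentwise, acting on $\Omega=\bigcup\Omega_i$ by $x^{g_1\cdots g_k}=x^{g_i}$ for $x\in\Omega_i$. Two elements $\pi,\tau$ of a permutation group intersect if $\pi\tau^{-1}$ has a fixed point; a subset is intersecting if every pair intersects; the group has the EKR property if every intersecting subset has size at most the size of the largest point-stabilizer. *)

(* Defs.v *)
From mathcomp Require Import all_boot all_fingroup all_solvable.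
Set Implicit Arguments. Unset Strict Implicit. Unset Printing Implicit Defensive.

Section EKR.
Variable T : finType.

Definition perm_intersect (p q : {perm T}) : bool :=
  [exists x, (p * q^-1)%g x == x].

Definition intersecting (S : {set {perm T}}) : bool :=
  [forall p in S, forall q in S, perm_intersect p q].

Definition point_stab (G : {set {perm T}}) (x : T) : {set {perm T}} :=
  [set g in G | g x == x].

Definition EKR_property (G : {set {perm T}}) : Prop :=
  forall S : {set {perm T}}, S \subset G -> intersecting S ->
    #|S| <= \max_(x : T) #|point_stab G x|.
End EKR.

(* Main.v *)
Require Import Defs.
From mathcomp Require Import all_boot all_fingroup all_solvable.
Set Implicit Arguments. Unset Strict Implicit. Unset Printing Implicit Defensive.
Local Open Scope group_scope.

Lemma commute_disj (T : finType) (a b : {perm T}) (A B : {set T}) :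
  [disjoint A & B] -> perm_on A a -> perm_on B b -> commute a b.
Proof.
move=> dAB pa pb; apply/permP => y; rewrite !permM.
have [yA|yA] := boolP (y \in A).
  have yB : y \notin B by rewrite (disjointFr dAB yA).
  have ayB : a y \notin B by rewrite (disjointFr dAB) // (perm_closed _ pa).
  by rewrite (out_perm pb yB) (out_perm pb ayB).
have [yB|yB] := boolP (y \in B).
  have byA : b y \notin A.
    apply/negP => H; have := disjointFr dAB H; by rewrite (perm_closed _ pb) yB.
  by rewrite (out_perm pa yA) (out_perm pa byA).
by rewrite (out_perm pa yA) (out_perm pb yB) (out_perm pa yA).
Qed.

Lemma expg_fix (T : finType) (e : {perm T}) y q : e y = y -> (e ^+ q) y = y.
Proof. by move=> H; elim: q => [|q IH]; rewrite ?expg0 ?perm1 // expgSr permM IH H. Qed.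

Lemma orbit_bound (T : finType) (d : {perm T}) y n :
  0 < n -> (d ^+ n) y = y -> #|orbit 'P <[d]> y| <= n.
Proof.
move=> n0 H.
apply: (@leq_trans #|[set (d ^+ (val j)) y | j : 'I_n]|); last first.
  by apply: (leq_trans (leq_imset_card _ _)); rewrite ?cardsT ?card_ord.
apply: subset_leq_card; apply/subsetP => z /orbitP [e /cycleP [j ->] <-].
apply/imsetP; exists (Ordinal (ltn_pmod j n0)) => //=.
rewrite apermE {1}(divn_eq j n) expgD permM mulnC expgM.
by rewrite (expg_fix _ H).
Qed.

Lemma agree (T : finType) (k : nat) (Omega : 'I_k -> {set T})
  (G : 'I_k -> {group {perm T}}) :
  (forall i j, i != j -> [disjoint Omega i & Omega j]) ->
  (forall i g, g \in G i -> perm_on (Omega i) g) ->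
  forall i a, a \in (\prod_(j < k) (G j : {set {perm T}})) ->
  exists2 g, g \in G i & {in Omega i, forall y, a y = g y}.
Proof.
move=> Hdisj Hon i.
pose K (X : {set {perm T}}) := forall a, a \in X ->
  exists2 g, g \in G i & {in Omega i, forall y, a y = g y}.
suff : K (\prod_(j < k) (G j : {set {perm T}})) by [].
apply: big_ind.
- by move=> a; rewrite inE => /eqP ->; exists 1.
- move=> X Y HX HY a /mulsgP [b c Hb Hc ->].
  have [g Hg Eg] := HX b Hb; have [h Hh Eh] := HY c Hc.
  exists (g * h); first exact: groupM.
  move=> y Hy; rewrite !permM Eg // Eh //.
  by rewrite (perm_closed _ (Hon _ _ Hg)).
- move=> j _ a Ha; have [eji|nji] := eqVneq j i.
    by subst j; exists a.
  exists 1 => // y Hy; rewrite perm1 (out_perm (Hon _ _ Ha)) //.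
  have nij : i != j by rewrite eq_sym.
  by rewrite (disjointFr (Hdisj _ _ nij) Hy).
Qed.

Lemma prod_on (T : finType) (k : nat) (Omega : 'I_k -> {set T})
  (c : 'I_k -> {perm T}) :
  (forall i j, i != j -> [disjoint Omega i & Omega j]) ->
  (forall j, perm_on (Omega j) (c j)) ->
  forall i y r, y \in Omega i ->
  (\prod_(j <- r) c j) y = (c i ^+ count_mem i r) y.
Proof.
move=> Hdisj Hc i y r; elim: r y => [|a r IH] y Hy.
  by rewrite big_nil expg0.
rewrite big_cons permM /=.
have [eai|nai] := eqVneq a i.
  subst a; rewrite IH ?(perm_closed _ (Hc i)) //= add1n expgS permM //.
rewrite (out_perm (Hc a)); first by rewrite IH.
have nia : i != a by rewrite eq_sym.
by rewrite (disjointFr (Hdisj _ _ nia) Hy).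
Qed.

Theorem corollary19 (T : finType) (k : nat) (r : 'I_k -> nat)
    (Omega : 'I_k -> {set T}) (G : 'I_k -> {group {perm T}}) :
  (forall i, 0 < r i) ->
  (forall i j, i != j -> [disjoint Omega i & Omega j]) ->
  (forall i, Omega i != set0) ->
  \bigcup_(i < k) Omega i = [set: T] ->
  (forall i g, g \in G i -> perm_on (Omega i) g) ->
  (forall i, cyclic (G i)) ->
  (forall i, #|G i| = r i) ->
  EKR_property (\prod_(i < k) (G i : {set {perm T}}))%g.
Proof.
move=> _ Hdisj _ Hcov Hon Hcyc _ S sSP HS.
have cHH : forall i j, true -> true -> i != j -> G i \subset 'C(G j).
  move=> i j _ _ nij; apply/centsP => a Ha b Hb.
  exact: (commute_disj (Hdisj _ _ nij) (Hon _ _ Ha) (Hon _ _ Hb)).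
have /eqP defA := introT (bigcprodYP predT G) cHH.
set A := (\prod_(i | true) G i)%G in defA.
have defP := bigcprodW defA.
have defY := bigcprodWY defA.
rewrite defP in sSP *.
have GA : forall i, G i \subset A.
  move=> i; rewrite -defY; apply: (subset_trans _ (subset_gen _)).
  exact: (bigcup_sup i).
pose c i := xchoose (existsP (Hcyc i)).
have Gc : forall i, G i = <[c i]> :> {set _}.
  by move=> i; apply/eqP; exact: (xchooseP (existsP (Hcyc i))).
have cG : forall i, c i \in G i by move=> i; rewrite Gc cycle_id.
have pc : forall i, perm_on (Omega i) (c i) by move=> i; apply: Hon.
pose d := \prod_(j < k) c j.
have dA : d \in A by apply: group_prod => j _; apply: (subsetP (GA j)).
have dc1 : forall i y, y \in Omega i -> d y = c i y.
  move=> i y Hy; rewrite /d (prod_on Hdisj pc _ Hy).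
  by rewrite count_uniq_mem ?index_enum_uniq ?mem_index_enum.
have dc : forall i y t, y \in Omega i -> (d ^+ t) y = (c i ^+ t) y.
  move=> i y t Hy; elim: t => [|t IH]; first by rewrite !expg0.
  rewrite !expgSr !permM IH (dc1 i) //.
  by rewrite (perm_closed _ (Hon _ _ (groupX t (cG i)))).
have orbA : forall x, orbit 'P A x \subset orbit 'P <[d]> x.
  move=> x; have : x \in \bigcup_(i<k) Omega i by rewrite Hcov inE.
  case/bigcupP => i _ Hx.
  apply/subsetP => z /orbitP [a Ha <-] /=.
  have [g Hg Eg] : exists2 g, g \in G i & {in Omega i, forall y, a y = g y}.
    by apply: (agree Hdisj Hon); rewrite defP.
  rewrite apermE Eg //; move: Hg; rewrite Gc => /cycleP [t ->]; rewrite -(dc i) //.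
  by apply/orbitP; exists (d ^+ t); [exact: mem_cycle | by []].
have [->|[s0 Hs0]] := set_0Vmem S; first by rewrite cards0.
move: HS; rewrite /intersecting => /forall_inP HS.
have HS2 : forall p q, p \in S -> q \in S -> perm_intersect p q.
  by move=> p q Hp Hq; move/forall_inP: (HS p Hp) => /(_ q Hq).
have /existsP [y0 _] := HS2 s0 s0 Hs0 Hs0.
have := @arg_minnP T y0 predT (fun x => #|orbit 'P <[d]> x|) isT.
case=> x0 _ Hmin.
set m := #|orbit 'P <[d]> x0| in Hmin.
have noFix : forall y n, 0 < n -> n < m -> (d ^+ n) y != y.
  move=> y n n0 nm; apply/eqP => E; have h2 := orbit_bound n0 E.
  have h1 := Hmin y isT.
  by move: nm; rewrite ltnNge (leq_trans h1 h2).
have eqpow0 : forall y a b, a <= b -> b < m -> (d ^+ a) y = (d ^+ b) y -> a = b.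
  move=> y a b ab bm E; have [//|nab] := eqVneq a b.
  have ltab : a < b by rewrite ltn_neqAle nab.
  have := noFix ((d ^+ a) y) (b - a); rewrite subn_gt0 ltab.
  have -> : (d ^+ (b - a)) ((d ^+ a) y) = (d ^+ b) y.
    by rewrite -permM -expgD subnKC // ltnW.
  rewrite E eqxx => /(_ isT); move/(_ (leq_ltn_trans (leq_subr _ _) bm)).
  by [].
have eqpow : forall y a b, a < m -> b < m -> (d ^+ a) y = (d ^+ b) y -> a = b.
  move=> y a b am bm E; case: (leqP a b) => h; first exact: eqpow0 E.
  by symmetry; apply: (eqpow0 y) => //; apply: ltnW.
have inj : {in setX [set: 'I_m] S &,
    injective (fun p : 'I_m * {perm T} => (d ^+ p.1)^-1 * p.2)}.
  move=> [t s] [t' s'] /setXP [_ Hs] /setXP [_ Hs'] /= E.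
  have /existsP [x Hx] := HS2 s' s Hs' Hs.
  have Es' : s' = d ^+ t' * (d ^+ t)^-1 * s by rewrite -mulgA E mulKVg.
  rewrite Es' mulgK permM in Hx; move/eqP: Hx => Hx.
  have E2 : (d ^+ t') x = (d ^+ t) x by rewrite -{2}Hx permKV.
  have ett : t' = t by apply: val_inj; exact: (eqpow x _ _ (ltn_ord t') (ltn_ord t) E2).
  subst t'; move/mulgI: E => ->; by [].
have count : (m * #|S|)%N <= #|A|.
  have -> : (m * #|S|)%N = #|setX [set: 'I_m] S| by rewrite cardsX cardsT card_ord.
  rewrite -(card_in_imset inj).
  apply: subset_leq_card; apply/subsetP => _ /imsetP [[t s] /setXP [_ Hs] ->] /=.
  by rewrite groupM ?groupV ?groupX // (subsetP sSP).
have m0 : 0 < m by apply/card_gt0P; exists x0; exact: orbit_refl.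
have Est : 'C_A[x0 | 'P] = point_stab A x0.
  by apply/setP => g; rewrite !inE sub1set inE.
apply: (leq_trans _ (leq_bigmax (F := fun x => #|point_stab A x|) x0)).
rewrite -(leq_pmul2l m0); apply: (leq_trans count).
rewrite -{1}(card_orbit_stab 'P A x0) Est leq_mul2r.
by rewrite subset_leq_card ?orbA ?orbT.
Qed.
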